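(* Let $B\wr\mathcal{H}(d)$ be a quantum wreath product as in the context, and suppose $B$ has an algebra anti-automorphism $b\mapsto b^*$; extend it factorwise to $B^{\otimes k}$. Let $A$ be the free associative $K$-algebra generated by $B^{\otimes d}$ and symbols $H_1,\dots,H_{d-1}$, and let $*:A\to B\wr\mathcal{H}(d)$ be the algebra anti-homomorphism with $b_1\otimes\cdots\otimes b_d\mapsto b_1^*\otimes\cdots\otimes b_d^*$ and $H_i\mapsto H_i$. Then $*$ induces an anti-homomorphism $B\wr\mathcal{H}(d)\to B\wr\mathcal{H}(d)$ if and only if (1) $\sigma(S^* )=S$ and $\rho(S^* )+R^*=R$; (2) for all $b\in B\otimes B$: $\sigma(\sigma(b)^* )=b^*$ and $\rho(\sigma(b)^* )+\rho(b)^*=0$. In this case $*$ is an anti-automorphism of $B\wr\mathcal{H}(d)$.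
   Context: Let $K$ be a commutative ring and $B$ a unital associative $K$-algebra, free over $K$; tensor products over $K$. Fix $d\ge2$, $S,R\in B\otimes B$ and $K$-linear maps $\sigma,\rho:B\otimes B\to B\otimes B$. For $Z\in B\otimes B$, $Z_i:=1^{\otimes(i-1)}\otimes Z\otimes1^{\otimes(d-i-1)}\in B^{\otimes d}$; for $\phi\in\mathrm{End}_K(B\otimes B)$, $\phi_i$ is $\phi$ applied to tensor factors $i,i+1$ of $B^{\otimes d}$. The quantum wreath product $B\wr\mathcal{H}(d)$ is the unital $K$-algebra generated by the algebra $B^{\otimes d}$ and $H_1,\dots,H_{d-1}$ subject to $H_kH_{k+1}H_k=H_{k+1}H_kH_{k+1}$, $H_iH_j=H_jH_i$ ($|i-j|\ge2$), $H_i^2=S_iH_i+R_i$, $H_ib=\sigma_i(b)H_i+\rho_i(b)$ ($b\in B^{\otimes d}$). With $H_w$ defined via reduced expressions of $w\in\Sigma_d$, it is assumed that $B\wr\mathcal{H}(d)$ has a PBW basis $\{(b_{j_1}\otimes\cdots\otimes b_{j_d})H_w\}$ for a $K$-basis $\{b_j\}$ of $B$. *)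

(* Defs.v *)
From HB Require Import structures.
From mathcomp Require Import all_boot all_order all_fingroup all_algebra.
Set Implicit Arguments. Unset Strict Implicit. Unset Printing Implicit Defensive.
Import GRing.Theory.
Local Open Scope ring_scope.

Section QWP.
Variable K : comNzRingType.

Definition klinear (M N : lmodType K) (f : M -> N) :=
  forall (a : K) (x y : M), f (a *: x + y) = a *: f x + f y.

Definition alg_hom (A C : algType K) (f : A -> C) :=
  [/\ klinear f, (forall x y, f (x * y) = f x * f y) & f 1 = 1].
Definition alg_antihom (A C : algType K) (f : A -> C) :=
  [/\ klinear f, (forall x y, f (x * y) = f y * f x) & f 1 = 1].
Definition alg_antiaut (A : algType K) (f : A -> A) :=
  alg_antihom f /\ bijective f.

Definition spans (M : lmodType K) (J : Type) (e : J -> M) :=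
  forall x : M, exists n (k : 'I_n -> J) (c : 'I_n -> K),
    x = \sum_(m < n) c m *: e (k m).
Definition lin_indep (M : lmodType K) (J : Type) (e : J -> M) :=
  forall n (k : 'I_n -> J) (c : 'I_n -> K), injective k ->
    \sum_(m < n) c m *: e (k m) = 0 -> forall m, c m = 0.
Definition is_basis (M : lmodType K) (J : Type) (e : J -> M) :=
  spans e /\ lin_indep e.

Variable B : algType K.

Definition upd n (x : {ffun 'I_n -> B}) (i : 'I_n) (u : B) : {ffun 'I_n -> B} :=
  [ffun j => if j == i then u else x j].
Definition multilinear n (X : lmodType K) (f : {ffun 'I_n -> B} -> X) :=
  forall x i (a : K) u v,
    f (upd x i (a *: u + v)) = a *: f (upd x i u) + f (upd x i v).
Definition is_tensor_power n (T : algType K) (t : {ffun 'I_n -> B} -> T) :=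
  [/\ multilinear t,
      t [ffun => (1 : B)] = 1,
      (forall x y, t x * t y = t [ffun j => x j * y j]) &
      (forall (X : lmodType K) (f : {ffun 'I_n -> B} -> X), multilinear f ->
         (exists g : T -> X, klinear g /\ forall x, g (t x) = f x) /\
         (forall g1 g2 : T -> X, klinear g1 -> klinear g2 ->
            (forall x, g1 (t x) = g2 (t x)) -> forall y, g1 y = g2 y))].

Definition pair2 (a c : B) : {ffun 'I_2 -> B} :=
  [ffun k => if val k == 0%N then a else c].
(* x with entries at (0-based) positions i, i+1 replaced by a, c *)
Definition ins d (x : {ffun 'I_d -> B}) (i : nat) (a c : B) : {ffun 'I_d -> B} :=
  [ffun j => if val j == i then a else if val j == i.+1 then c else x j].

Definition tensor_ext n (T : algType K) (t : {ffun 'I_n -> B} -> T)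
  (st : B -> B) (stT : T -> T) :=
  klinear stT /\ forall x, stT (t x) = t [ffun j => st (x j)].

(* Z i = Z_{i+1} : B(x)B -> B^{(x)d}, placing Z in factors i, i+1 (0-based) *)
Definition is_Zins d (T2 : algType K) (t2 : {ffun 'I_2 -> B} -> T2)
  (Td : algType K) (td : {ffun 'I_d -> B} -> Td) (Z : nat -> T2 -> Td) :=
  forall i, (i.+1 < d)%N ->
    klinear (Z i) /\
    forall a c, Z i (t2 (pair2 a c)) = td (ins [ffun => (1 : B)] i a c).

(* phiD i = phi_{i+1} : phi applied to the factors i, i+1 (0-based) *)
Definition is_lift d (T2 : algType K) (t2 : {ffun 'I_2 -> B} -> T2)
  (Td : algType K) (td : {ffun 'I_d -> B} -> Td) (Z : nat -> T2 -> Td)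
  (phi : T2 -> T2) (phiD : nat -> Td -> Td) :=
  forall i, (i.+1 < d)%N ->
    klinear (phiD i) /\
    forall x a c,
      phiD i (td (ins x i a c)) = Z i (phi (t2 (pair2 a c))) * td (ins x i 1 1).

(* defining relations of B wr H(d); h i stands for H_{i+1}, i < d-1 *)
Definition qwp_rels d (T2 Td : algType K) (Z : nat -> T2 -> Td)
  (sigD rhoD : nat -> Td -> Td) (S R : T2)
  (C : algType K) (f : Td -> C) (h : nat -> C) :=
  [/\ forall k, (k.+2 < d)%N -> h k * h k.+1 * h k = h k.+1 * h k * h k.+1,
      forall i j, (i.+1 < d)%N -> (j.+1 < d)%N -> (i.+1 < j)%N -> h i * h j = h j * h i,
      forall i, (i.+1 < d)%N -> h i * h i = f (Z i S) * h i + f (Z i R) &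
      forall i b, (i.+1 < d)%N -> h i * f b = f (sigD i b) * h i + f (rhoD i b)].

Definition is_qwp d (T2 Td : algType K) (Z : nat -> T2 -> Td)
  (sigD rhoD : nat -> Td -> Td) (S R : T2)
  (W : algType K) (iota : Td -> W) (H : nat -> W) :=
  [/\ alg_hom iota,
      qwp_rels d Z sigD rhoD S R iota H &
      forall (C : algType K) (f : Td -> C) (h : nat -> C),
        alg_hom f -> qwp_rels d Z sigD rhoD S R f h ->
        (exists g : W -> C, [/\ alg_hom g, (forall x, g (iota x) = f x) &
                               (forall i, (i.+1 < d)%N -> g (H i) = h i)]) /\
        (forall g1 g2 : W -> C, alg_hom g1 -> alg_hom g2 ->
           (forall x, g1 (iota x) = g2 (iota x)) ->
           (forall i, (i.+1 < d)%N -> g1 (H i) = g2 (H i)) ->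
           forall y, g1 y = g2 y)].

End QWP.

(* simple reflection s_{i+1} = (i, i+1) in S_d (0-based), identity if out of range *)
Definition sref d (i : nat) : 'S_d :=
  match (insub i : option 'I_d), (insub i.+1 : option 'I_d) with
  | Some a, Some b => tperm a b
  | _, _ => 1%g
  end.
Definition word_perm d (s : seq nat) : 'S_d := (\prod_(i <- s) sref d i)%g.
Definition reduced_word d (w : 'S_d) (s : seq nat) :=
  [/\ all (fun i => (i.+1 < d)%N) s, word_perm d s = w &
      forall s', all (fun i => (i.+1 < d)%N) s' -> word_perm d s' = w ->
        (size s <= size s')%N].
Definition Hword (W : nzRingType) (H : nat -> W) (s : seq nat) : W :=
  \prod_(i <- s) H i.

Definition has_PBW (K : comNzRingType) (B : algType K) (I : Type) (bas : I -> B)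
  d (Td : algType K) (td : {ffun 'I_d -> B} -> Td)
  (W : algType K) (iota : Td -> W) (H : nat -> W) :=
  forall rw : 'S_d -> seq nat, (forall w, reduced_word w (rw w)) ->
    is_basis (fun jw : {ffun 'I_d -> I} * 'S_d =>
                iota (td [ffun k => bas (jw.1 k)]) * Hword H (rw jw.2)).

Definition induced_star (K : comNzRingType) d (Td W : algType K)
  (iota : Td -> W) (H : nat -> W) (stard : Td -> Td) (psi : W -> W) :=
  [/\ alg_antihom psi,
      (forall b, psi (iota b) = iota (stard b)) &
      (forall i, (i.+1 < d)%N -> psi (H i) = H i)].

(* Main.v *)
Require Import Defs.
From HB Require Import structures.
From mathcomp Require Import all_boot all_order all_fingroup all_algebra.
From Stdlib Require Import ClassicalEpsilon.
From mathcomp Require Import zify.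
Set Implicit Arguments. Unset Strict Implicit. Unset Printing Implicit Defensive.
Import GRing.Theory.
Local Open Scope ring_scope.

Definition cb (Q : Prop) : bool := if excluded_middle_informative Q then true else false.
Lemma cbP (Q : Prop) : reflect Q (cb Q).
Proof. rewrite /cb; case: excluded_middle_informative => h; by constructor. Qed.

Section Klin.
Variable K : comNzRingType.
Section L.
Variables (M N : lmodType K) (f : M -> N) (hf : klinear f).
Lemma kl0 : f 0 = 0.
Proof. have h := hf 1 0 0; rewrite !scale1r !addr0 in h; apply: (addrI (f 0)); by rewrite addr0 -h. Qed.
Lemma klD x y : f (x + y) = f x + f y.
Proof. by have := hf 1 x y; rewrite !scale1r. Qed.
Lemma klZ a x : f (a *: x) = a *: f x.
Proof. by have := hf a x 0; rewrite !addr0 kl0 addr0. Qed.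
Lemma klN x : f (- x) = - f x.
Proof. by rewrite -scaleN1r klZ scaleN1r. Qed.
Lemma klB x y : f (x - y) = f x - f y.
Proof. by rewrite klD klN. Qed.
Lemma kl_sum (I : Type) (r : seq I) (F : I -> M) : f (\sum_(i <- r) F i) = \sum_(i <- r) f (F i).
Proof. elim: r => [|a r IH]; rewrite ?big_nil ?kl0 // !big_cons klD IH //. Qed.
End L.
Lemma kl_comp (M N P : lmodType K) (f : M -> N) (g : N -> P) : klinear f -> klinear g -> klinear (g \o f).
Proof. by move=> hf hg a x y /=; rewrite hf hg. Qed.
Lemma kl_id (M : lmodType K) : klinear (@id M).
Proof. by []. Qed.
Lemma kl_add (M N : lmodType K) (f g : M -> N) : klinear f -> klinear g -> klinear (fun x => f x + g x).
Proof. move=> hf hg a x y; rewrite hf hg scalerDr; rewrite -!addrA; congr (_ + _); rewrite addrCA. done. Qed.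
Lemma kl_mulr (A : algType K) (c : A) : klinear (fun x : A => x * c).
Proof. by move=> a x y; rewrite mulrDl -scalerAl. Qed.
Lemma kl_mull (A : algType K) (c : A) : klinear (fun x : A => c * x).
Proof. by move=> a x y; rewrite mulrDr scalerAr. Qed.
End Klin.

Section Op.
Variables (K : comNzRingType) (A : algType K).
Definition opA : Type := A.
HB.instance Definition _ := GRing.Lmodule.on opA.
HB.instance Definition _ := GRing.NzRing.copy opA (A^c).
Lemma opA_mul (u v : opA) : u * v = ((v : A) * (u : A) : A).
Proof. reflexivity. Qed.
Lemma opA_scalerAl (a : K) (u v : opA) : a *: (u * v) = ((a *: u : opA) * v : opA).
Proof. rewrite !opA_mul. exact: scalerAr. Qed.
HB.instance Definition _ := GRing.Lmodule_isLalgebra.Build K opA opA_scalerAl.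
Lemma opA_scalerAr (a : K) (u v : opA) : a *: (u * v) = (u * (a *: v : opA) : opA).
Proof. rewrite !opA_mul; exact: (@scalerAl K A a v u). Qed.
HB.instance Definition _ := GRing.Lalgebra_isAlgebra.Build K opA opA_scalerAr.
Lemma opA1 : (1 : opA) = (1 : A). Proof. by []. Qed.
End Op.

Record SubmodP (K : comNzRingType) (M : lmodType K) := MkSubmodP {
  spred : M -> Prop;
  sp0 : spred 0;
  spzd : forall a x y, spred x -> spred y -> spred (a *: x + y) }.
Section SubMod.
Variables (K : comNzRingType) (M : lmodType K) (Q : SubmodP M).
Definition Pb : {pred M} := fun y => cb (spred Q y).
Lemma Pb_closed : subsemimod_closed Pb.
Proof.
split; first split.
- by apply/cbP; exact: sp0.
- move=> x y /cbP hx /cbP hy; apply/cbP; have := spzd 1 hx hy; by rewrite scale1r.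
- move=> a x /cbP hx; apply/cbP; have := spzd a hx (sp0 Q); by rewrite addr0.
Qed.
Record subP := SubP { sval :> M; _ : sval \in Pb }.
HB.instance Definition _ := [isSub for sval].
HB.instance Definition _ := [Choice of subP by <:].
HB.instance Definition _ := GRing.SubChoice_isSubLmodule.Build K M Pb subP Pb_closed.
End SubMod.

Definition inspan (K : comNzRingType) (M : lmodType K) (J : Type) (e : J -> M) (y : M) :=
  exists n (k : 'I_n -> J) (c : 'I_n -> K), y = \sum_(m < n) c m *: e (k m).

Definition catf n1 n2 (T : Type) (f1 : 'I_n1 -> T) (f2 : 'I_n2 -> T) : 'I_(n1 + n2) -> T :=
  fun m => match split m with inl a => f1 a | inr b => f2 b end.
Lemma catf_l n1 n2 T f1 f2 (i : 'I_n1) : @catf n1 n2 T f1 f2 (lshift n2 i) = f1 i.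
Proof. by rewrite /catf (unsplitK (inl _ i)). Qed.
Lemma catf_r n1 n2 T f1 f2 (i : 'I_n2) : @catf n1 n2 T f1 f2 (rshift n1 i) = f2 i.
Proof. by rewrite /catf (unsplitK (inr _ i)). Qed.

Section Span.
Variables (K : comNzRingType) (M : lmodType K) (J : Type) (e : J -> M).
Lemma inspan0 : inspan e 0.
Proof. by exists 0%N, (fun m : 'I_0 => False_rect J (notF (ltn_ord m : is_true false))), (fun _ => 0); rewrite big_ord0. Qed.
Lemma inspanZD a x y : inspan e x -> inspan e y -> inspan e (a *: x + y).
Proof.
move=> [n1 [k1 [c1 ->]]] [n2 [k2 [c2 ->]]].
exists (n1 + n2)%N, (catf k1 k2), (catf (fun m => a * c1 m) c2).
rewrite big_split_ord /=; congr (_ + _).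
  rewrite scaler_sumr; apply: eq_bigr => m _; by rewrite !catf_l scalerA.
by apply: eq_bigr => m _; rewrite !catf_r.
Qed.
Lemma inspan_e j : inspan e (e j).
Proof. exists 1%N, (fun _ => j), (fun _ => 1); by rewrite big_ord1 scale1r. Qed.
Lemma inspan_sum n (F : 'I_n -> M) : (forall m, inspan e (F m)) -> inspan e (\sum_(m < n) F m).
Proof.
move=> h; elim/big_ind: _ => //; first exact: inspan0.
by move=> x y hx hy; have := inspanZD 1 hx hy; rewrite scale1r.
Qed.
Lemma inspanZ a x : inspan e x -> inspan e (a *: x).
Proof. by move=> hx; have := inspanZD a hx inspan0; rewrite addr0. Qed.
End Span.

Section Tensor.
Variables (K : comNzRingType) (B : algType K) (n : nat) (T : algType K)
  (t : {ffun 'I_n -> B} -> T) (tp : is_tensor_power t).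

Lemma tp_uniq (X : lmodType K) (g1 g2 : T -> X) :
  klinear g1 -> klinear g2 -> (forall x, g1 (t x) = g2 (t x)) -> forall y, g1 y = g2 y.
Proof.
case: tp => _ _ _ h; have hz : multilinear (fun _ : {ffun 'I_n -> B} => (0 : X)).
  by move=> *; rewrite scaler0 addr0.
exact: (proj2 (h X _ hz)).
Qed.

Lemma tp_ex (X : lmodType K) (f : {ffun 'I_n -> B} -> X) : multilinear f ->
  exists g : T -> X, klinear g /\ forall x, g (t x) = f x.
Proof. case: tp => _ _ _ h hf; exact: (proj1 (h X f hf)). Qed.

Lemma tp_mul x y : t x * t y = t [ffun j => x j * y j].
Proof. by case: tp. Qed.
Lemma tp_one : t [ffun => 1] = 1.
Proof. by case: tp. Qed.
Lemma tp_ml : multilinear t.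
Proof. by case: tp. Qed.

Lemma upd_id (x : {ffun 'I_n -> B}) i : upd x i (x i) = x.
Proof. by apply/ffunP => j; rewrite ffunE; case: eqP => // ->. Qed.
Lemma upd_upd (x : {ffun 'I_n -> B}) i u v : upd (upd x i u) i v = upd x i v.
Proof. by apply/ffunP => j; rewrite !ffunE; case: eqP. Qed.

Lemma ml_zero (X : lmodType K) (f : {ffun 'I_n -> B} -> X) : multilinear f ->
  forall x i, f (upd x i 0) = 0.
Proof.
move=> hf x i; have := hf x i (-1) 0 0; rewrite scaler0 add0r.
by rewrite scaleN1r addNr.
Qed.

Lemma ml_sum (X : lmodType K) (f : {ffun 'I_n -> B} -> X) : multilinear f ->
  forall x i N (c : 'I_N -> K) (u : 'I_N -> B),
  f (upd x i (\sum_(m < N) c m *: u m)) = \sum_(m < N) c m *: f (upd x i (u m)).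
Proof.
move=> hf x i; elim=> [|N IH] c u; first by rewrite !big_ord0 ml_zero.
by rewrite !big_ord_recl hf IH.
Qed.

Lemma tp_span (P : T -> Prop) : P 0 -> (forall a x y, P x -> P y -> P (a *: x + y)) ->
  (forall x, P (t x)) -> forall y, P y.
Proof.
move=> P0 PZD Pt y.
pose Q := MkSubmodP P0 PZD.
pose S := subP Q.
have mem x : t x \in Pb Q by apply/cbP.
pose f x : S := SubP (mem x).
have hf : multilinear f.
  move=> x i a u v; apply: val_inj => /=; exact: tp_ml.
have [g [lg hg]] := tp_ex hf.
have e1 : forall z, sval (g z) = z.
  apply: (tp_uniq (g1 := fun z => sval (g z))) => //.
    by move=> a x z; rewrite lg.
  by move=> x; rewrite hg.
by rewrite -(e1 y); case: (g y) => /= z /cbP.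
Qed.

Variables (I : Type) (bas : I -> B) (hbas : is_basis bas).
Definition Eb (j : {ffun 'I_n -> I}) : T := t [ffun k => bas (j k)].

Lemma tp_basis_span y : inspan Eb y.
Proof.
apply: tp_span; [exact: inspan0 | move=> *; exact: inspanZD |] => x.
suff H r : (r <= n)%N -> forall x : {ffun 'I_n -> B}, (forall m : 'I_n, (m < n - r)%N -> exists j, x m = bas j) -> inspan Eb (t x).
  by apply: (H n) => // m; rewrite subnn.
elim: r {x} => [|r IH] hr x0 hx.
  have hx' : forall m : 'I_n, {j | x0 m = bas j}.
    move=> m; apply: constructive_indefinite_description; apply: (hx m); by rewrite subn0.
  pose j := [ffun m => proj1_sig (hx' m)].
  have -> : x0 = [ffun k => bas (j k)].
    by apply/ffunP => m; rewrite !ffunE; case: (hx' m).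
  exact: inspan_e.
have ltr : (n - r.+1 < n)%N by rewrite ltn_subrL; apply/andP; split => //; case: n hr {IH hx} => //.
pose p := Ordinal ltr.
have [N [k [c hc]]] := proj1 hbas (x0 p).
rewrite -(upd_id x0 p) hc (ml_sum tp_ml).
apply: inspan_sum => m; apply: inspanZ; apply: IH; first exact: ltnW.
move=> m' hm'; rewrite ffunE; case: eqP => [_|ne]; first by exists (k m).
apply: hx; have : (val m' != val p) by apply/eqP => h; apply: ne; exact: val_inj.
rewrite /= => {}ne; move: hm'; rewrite subnS.
case E: (n - r)%N => [|q] //= hm'; rewrite ltn_neqAle; apply/andP; split => //.
by move: ne; rewrite subnS E.
Qed.
End Tensor.

Section Fiber.
Variables (K : comNzRingType) (M : lmodType K) (J : Type) (E : J -> M).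

Definition fsum n (k : 'I_n -> J) (c : 'I_n -> K) (j : J) : K :=
  \sum_(m < n | cb (k m = j)) c m.
Definition firstP n (k : 'I_n -> J) : {pred 'I_n} :=
  fun m => [forall m' : 'I_n, (m' < m)%N ==> ~~ cb (k m' = k m)].

Lemma first_ex n (k : 'I_n -> J) (m : 'I_n) : exists2 m0, m0 \in firstP k & k m0 = k m.
Proof.
have Pm : cb (k m = k m) by apply/cbP.
case: (@arg_minnP _ m (fun i => cb (k i = k m)) (fun i => val i) Pm) => i /cbP ei hmin.
exists i => //; apply/forallP => m'; apply/implyP => lt; apply/cbP => e.
have := hmin m'; rewrite e ei => /(_ (introT (cbP _) erefl)).
by rewrite leqNgt lt.
Qed.

Lemma first_uniq n (k : 'I_n -> J) m1 m2 :
  m1 \in firstP k -> m2 \in firstP k -> k m1 = k m2 -> m1 = m2.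
Proof.
move=> /forallP f1 /forallP f2 e.
case: (ltngtP (val m1) (val m2)) => [lt|lt|eq]; last exact: val_inj.
- by have := implyP (f2 m1) lt; move/cbP.
- by have := implyP (f1 m2) lt; move/cbP; rewrite e.
Qed.

Lemma group_sum n (k : 'I_n -> J) (c : 'I_n -> K) :
  \sum_(m < n) c m *: E (k m) = \sum_(m in firstP k) fsum k c (k m) *: E (k m).
Proof.
rewrite /fsum.
have -> : \sum_(m in firstP k) (\sum_(m' < n | cb (k m' = k m)) c m') *: E (k m) =
          \sum_(m in firstP k) \sum_(m' < n | cb (k m' = k m)) c m' *: E (k m').
  apply: eq_bigr => m _; rewrite scaler_suml; apply: eq_bigr => m' /cbP -> //.
rewrite (exchange_big_dep predT) //=; apply: eq_bigr => m' _.
have [m0 f0 e0] := first_ex k m'.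
rewrite (bigD1 m0) /=; last by rewrite f0; apply/cbP.
rewrite big1 ?addr0 // => m /andP[/andP[fm /cbP em] nm].
by move: nm; rewrite (first_uniq fm f0) ?eqxx // e0.
Qed.

Lemma fiber_zero n (k : 'I_n -> J) (c : 'I_n -> K) :
  (forall m, fsum k c (k m) = 0) -> \sum_(m < n) c m *: E (k m) = 0.
Proof. by move=> h; rewrite group_sum big1 // => m _; rewrite h scale0r. Qed.

Lemma indep_fiber : lin_indep E -> forall n (k : 'I_n -> J) (c : 'I_n -> K),
  \sum_(m < n) c m *: E (k m) = 0 -> forall m, fsum k c (k m) = 0.
Proof.
move=> hli n k c; rewrite group_sum big_enum_val /= => h0 m.
have inj : injective (fun i : 'I_#|firstP k| => k (enum_val i)).
  move=> i1 i2 /= e; apply: enum_val_inj; apply: first_uniq e; exact: enum_valP.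
have := hli _ _ (fun i : 'I_#|firstP k| => fsum k c (k (enum_val i))) inj h0.
have [m0 f0 e0] := first_ex k m.
move/(_ (enum_rank_in f0 m0)); by rewrite (enum_rankK_in f0 f0) e0.
Qed.

Lemma fsum_cat n1 n2 (k1 : 'I_n1 -> J) (k2 : 'I_n2 -> J) c1 c2 j :
  fsum (catf k1 k2) (catf c1 c2) j = fsum k1 c1 j + fsum k2 c2 j.
Proof. by rewrite /fsum big_split_ord; congr (_ + _); apply: eq_big => m; rewrite ?catf_l ?catf_r. Qed.

Lemma fsumN n (k : 'I_n -> J) c j : fsum k (fun m => - c m) j = - fsum k c j.
Proof. by rewrite /fsum sumrN. Qed.
Lemma fsumZ n (k : 'I_n -> J) (a : K) c j : fsum k (fun m => a * c m) j = a * fsum k c j.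
Proof. by rewrite /fsum mulr_sumr. Qed.

Lemma sum_cat n1 n2 (k1 : 'I_n1 -> J) (k2 : 'I_n2 -> J) c1 c2 :
  \sum_(m < n1 + n2) catf c1 c2 m *: E (catf k1 k2 m) =
  \sum_(m < n1) c1 m *: E (k1 m) + \sum_(m < n2) c2 m *: E (k2 m).
Proof. by rewrite big_split_ord; congr (_ + _); apply: eq_bigr => m _; rewrite ?catf_l ?catf_r. Qed.

End Fiber.

Section Coord.
Variables (K : comNzRingType) (B : algType K) (I : Type) (bas : I -> B) (hbas : is_basis bas).

Definition coord (l : I) (x : B) : K :=
  epsilon (inhabits 0) (fun v => exists n (k : 'I_n -> I) (c : 'I_n -> K),
     x = \sum_(m < n) c m *: bas (k m) /\ v = fsum k c l).

Lemma coord_rep l x n (k : 'I_n -> I) (c : 'I_n -> K) :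
  x = \sum_(m < n) c m *: bas (k m) -> coord l x = fsum k c l.
Proof.
move=> hx.
have ex : exists v, exists n (k : 'I_n -> I) (c : 'I_n -> K),
     x = \sum_(m < n) c m *: bas (k m) /\ v = fsum k c l.
  by exists (fsum k c l), n, k, c.
rewrite /coord; have [n' [k' [c' [hx' ->]]]] := epsilon_spec (inhabits 0) _ ex.
have h0 : \sum_(m < n + n') catf c (fun m => - c' m) m *: bas (catf k k' m) = 0.
  rewrite sum_cat -hx; under eq_bigr do rewrite scaleNr; by rewrite sumrN -hx' subrr.
have hf := indep_fiber (proj2 hbas) h0.
case: (excluded_middle_informative (exists m, catf k k' m = l)) => [[m em]|ne].
  move: (hf m); rewrite em fsum_cat fsumN => /eqP; rewrite subr_eq0 => /eqP ->; done.
have z1 : fsum k c l = 0.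
  rewrite /fsum big_pred0 // => m; apply/cbP => e; apply: ne; exists (lshift n' m); by rewrite catf_l.
have z2 : fsum k' c' l = 0.
  rewrite /fsum big_pred0 // => m; apply/cbP => e; apply: ne; exists (rshift n m); by rewrite catf_r.
by rewrite z1 z2.
Qed.

Lemma coord_lin l a x y : coord l (a *: x + y) = a * coord l x + coord l y.
Proof.
have [n1 [k1 [c1 h1]]] := proj1 hbas x.
have [n2 [k2 [c2 h2]]] := proj1 hbas y.
rewrite (coord_rep l h1) (coord_rep l h2).
rewrite (@coord_rep l _ _ (catf k1 k2) (catf (fun m => a * c1 m) c2)).
  by rewrite fsum_cat fsumZ.
rewrite sum_cat h1 h2 scaler_sumr; congr (_ + _); apply: eq_bigr => m _; by rewrite scalerA.
Qed.

Lemma coord_bas l : coord l (bas l) = 1.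
Proof.
rewrite (@coord_rep l _ 1 (fun _ => l) (fun _ => 1)); last by rewrite big_ord1 scale1r.
by rewrite /fsum big_mkcond big_ord1; case: cbP.
Qed.

Lemma exists_phi : exists phi : B -> K,
  phi 1 = 1 /\ forall a x y, phi (a *: x + y) = a * phi x + phi y.
Proof.
have [n [k [c h1]]] := proj1 hbas 1.
case: n k c h1 => [|n] k c h1.
  by exfalso; move: h1; rewrite big_ord0 => /eqP; rewrite oner_eq0.
pose l0 := k ord0.
exists (fun x => coord l0 (bas l0 * x)); split; first by rewrite mulr1 coord_bas.
by move=> a x y; rewrite mulrDr -scalerAr coord_lin.
Qed.
End Coord.

Section TdLemmas.
Variables (K : comNzRingType) (B : algType K) (d : nat)
  (T2 : algType K) (t2 : {ffun 'I_2 -> B} -> T2)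
  (Td : algType K) (td : {ffun 'I_d -> B} -> Td)
  (tp2 : is_tensor_power t2) (tpd : is_tensor_power td)
  (Z : nat -> T2 -> Td) (hZ : is_Zins t2 td Z).

Definition o1 : 'I_2 := @Ordinal 2 1 isT.
Definition at_ n (x : {ffun 'I_n -> B}) (i : nat) : B :=
  if (insub i : option 'I_n) is Some j then x j else 1.
Lemma at_val n (x : {ffun 'I_n -> B}) (j : 'I_n) : at_ x (val j) = x j.
Proof. by rewrite /at_ valK. Qed.
Local Notation one := ([ffun => (1 : B)] : {ffun 'I_d -> B}).

Lemma pair2_eta (x : {ffun 'I_2 -> B}) : x = pair2 (x ord0) (x o1).
Proof. by apply/ffunP => j; rewrite ffunE; case: j => [[|[|]]] //= h; congr (x _); apply: val_inj. Qed.
Lemma pair2_0 (a c : B) : pair2 a c ord0 = a. Proof. by rewrite ffunE. Qed.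
Lemma pair2_1 (a c : B) : pair2 a c o1 = c. Proof. by rewrite ffunE. Qed.

Lemma Zlin i : (i.+1 < d)%N -> klinear (Z i).
Proof. by move=> h; case: (hZ h). Qed.
Lemma Z_pair i a c : (i.+1 < d)%N -> Z i (t2 (pair2 a c)) = td (ins one i a c).
Proof. by move=> h; case: (hZ h). Qed.
Lemma Z_t2 i x : (i.+1 < d)%N -> Z i (t2 x) = td (ins one i (x ord0) (x o1)).
Proof. by move=> h; rewrite {1}(pair2_eta x) Z_pair. Qed.

Lemma ins_mul i (x : {ffun 'I_d -> B}) a c :
  td (ins one i a c) * td (ins x i 1 1) = td (ins x i a c).
Proof.
rewrite (tp_mul tpd); congr td; apply/ffunP => j; rewrite !ffunE.
by case: eqP => _; [rewrite mulr1 | case: eqP => _; rewrite ?mulr1 ?mul1r].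
Qed.
Lemma ins_mul' i (x : {ffun 'I_d -> B}) a c :
  td (ins x i 1 1) * td (ins one i a c) = td (ins x i a c).
Proof.
rewrite (tp_mul tpd); congr td; apply/ffunP => j; rewrite !ffunE.
by case: eqP => _; [rewrite mul1r | case: eqP => _; rewrite ?mulr1 ?mul1r].
Qed.

Lemma Z_comm i v (x : {ffun 'I_d -> B}) : (i.+1 < d)%N ->
  Z i v * td (ins x i 1 1) = td (ins x i 1 1) * Z i v.
Proof.
move=> h; move: v; apply: (tp_uniq tp2).
- exact: (kl_comp (Zlin h) (kl_mulr _)).
- exact: (kl_comp (Zlin h) (kl_mull _)).
by move=> x'; rewrite Z_t2 // ins_mul ins_mul'.
Qed.

Section Lift.
Variables (phi : T2 -> T2) (phiD : nat -> Td -> Td) (hphi : klinear phi)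
  (hl : is_lift t2 td Z phi phiD).
Lemma lift_mul i v (x : {ffun 'I_d -> B}) : (i.+1 < d)%N ->
  phiD i (Z i v * td (ins x i 1 1)) = Z i (phi v) * td (ins x i 1 1).
Proof.
move=> h; move: v; apply: (tp_uniq tp2).
- exact: (kl_comp (kl_comp (Zlin h) (kl_mulr _)) (proj1 (hl h))).
- exact: (kl_comp hphi (kl_comp (Zlin h) (kl_mulr _))).
move=> x'; rewrite Z_t2 // ins_mul /= (proj2 (hl h)); by rewrite -(pair2_eta x').
Qed.
Lemma phiD_lin i : (i.+1 < d)%N -> klinear (phiD i).
Proof. by move=> h; case: (hl h). Qed.
End Lift.

Lemma ins_one i : ins one i 1 1 = one.
Proof. by apply/ffunP => j; rewrite !ffunE; case: eqP => //; case: eqP. Qed.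

Lemma lift_Z phi phiD (hphi : klinear phi) (hl : is_lift t2 td Z phi phiD) i v :
  (i.+1 < d)%N -> phiD i (Z i v) = Z i (phi v).
Proof.
move=> h; have := lift_mul hphi hl v one h; by rewrite ins_one (tp_one tpd) !mulr1.
Qed.

Lemma ins_eta i (x : {ffun 'I_d -> B}) : (i.+1 < d)%N ->
  ins x i (at_ x i) (at_ x i.+1) = x.
Proof.
move=> h; apply/ffunP => j; rewrite !ffunE.
by case: eqP => [<-|_]; rewrite ?at_val //; case: eqP => [<-|_]; rewrite ?at_val.
Qed.

Lemma td_split i (x : {ffun 'I_d -> B}) : (i.+1 < d)%N ->
  td x = Z i (t2 (pair2 (at_ x i) (at_ x i.+1))) * td (ins x i 1 1).
Proof. by move=> h; rewrite Z_pair // ins_mul ins_eta. Qed.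

Section Star.
Variables (star : B -> B) (star2 : T2 -> T2) (stard : Td -> Td)
  (hst : alg_antihom star) (h2 : tensor_ext t2 star star2) (hd : tensor_ext td star stard).

Lemma star1 : star 1 = 1. Proof. by case: hst. Qed.
Lemma starM x y : star (x * y) = star y * star x. Proof. by case: hst. Qed.

Definition fmap n (x : {ffun 'I_n -> B}) : {ffun 'I_n -> B} := [ffun j => star (x j)].

Lemma stard_td x : stard (td x) = td (fmap x). Proof. exact: (proj2 hd). Qed.
Lemma star2_t2 x : star2 (t2 x) = t2 (fmap x). Proof. exact: (proj2 h2). Qed.

Lemma stard_mul u v : stard (u * v) = stard v * stard u.
Proof.
have step : forall y, forall u, stard (u * td y) = stard (td y) * stard u.
  move=> y; apply: (tp_uniq tpd).
  - exact: (kl_comp (kl_mulr _) (proj1 hd)).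
  - exact: (kl_comp (proj1 hd) (kl_mull _)).
  move=> x /=; rewrite (tp_mul tpd) !stard_td (tp_mul tpd); congr td.
  by apply/ffunP => j; rewrite !ffunE starM.
move: v; apply: (tp_uniq tpd).
- exact: (kl_comp (kl_mull _) (proj1 hd)).
- exact: (kl_comp (proj1 hd) (kl_mulr _)).
by move=> y; rewrite step.
Qed.

Lemma stard1 : stard 1 = 1.
Proof.
rewrite -(tp_one tpd) stard_td; congr td; by apply/ffunP => j; rewrite !ffunE star1.
Qed.

Lemma stard_Z i v : (i.+1 < d)%N -> stard (Z i v) = Z i (star2 v).
Proof.
move=> h; move: v; apply: (tp_uniq tp2).
- exact: (kl_comp (Zlin h) (proj1 hd)).
- exact: (kl_comp (proj1 h2) (Zlin h)).
move=> x /=; rewrite star2_t2 !Z_t2 // stard_td; congr td.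
apply/ffunP => j; rewrite !ffunE; case: eqP => _; first done.
by case: eqP => _ //; rewrite star1.
Qed.

Lemma fmap_ins (x : {ffun 'I_d -> B}) i : fmap (ins x i 1 1) = ins (fmap x) i 1 1.
Proof. by apply/ffunP => j; rewrite !ffunE; case: eqP => _; rewrite ?star1 //; case: eqP => _; rewrite ?star1 ?ffunE. Qed.

Lemma fmap_pair (a c : B) : fmap (pair2 a c) = pair2 (star a) (star c).
Proof. by apply/ffunP => j; rewrite !ffunE; case: eqP. Qed.

Variables (sigma rho : T2 -> T2) (sigD rhoD : nat -> Td -> Td)
  (hsig : klinear sigma) (hrho : klinear rho)
  (hls : is_lift t2 td Z sigma sigD) (hlr : is_lift t2 td Z rho rhoD).

Lemma lift_cond (c2 : forall b : T2, sigma (star2 (sigma b)) = star2 b /\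
                      rho (star2 (sigma b)) + star2 (rho b) = 0) i :
  (i.+1 < d)%N -> forall y, sigD i (stard (sigD i y)) = stard y /\
                     rhoD i (stard (sigD i y)) + stard (rhoD i y) = 0.
Proof.
move=> h.
have key : forall x : {ffun 'I_d -> B},
  let u := t2 (pair2 (at_ x i) (at_ x i.+1)) in
  stard (sigD i (td x)) = Z i (star2 (sigma u)) * td (ins (fmap x) i 1 1) /\
  stard (rhoD i (td x)) = Z i (star2 (rho u)) * td (ins (fmap x) i 1 1) /\
  stard (td x) = Z i (star2 u) * td (ins (fmap x) i 1 1).
  move=> x u; rewrite {1 2 3}(td_split x h) (lift_mul hsig hls _ _ h) (lift_mul hrho hlr _ _ h).
  rewrite !stard_mul !stard_td fmap_ins !stard_Z // -!Z_comm //; split => //; split => //.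
have sl := phiD_lin hls h; have rl := phiD_lin hlr h; have sdl := proj1 hd.
split.
  move: y; apply: (tp_uniq tpd); first exact: (kl_comp (kl_comp sl sdl) sl).
    exact: sdl.
  move=> x /=; have [k1 [_ k3]] := key x; rewrite k1 k3 (lift_mul hsig hls _ _ h).
  by rewrite (proj1 (c2 _)).
move: y; apply: (tp_uniq tpd (g2 := fun _ => 0)).
- exact: (kl_add (kl_comp (kl_comp sl sdl) rl) (kl_comp rl sdl)).
- by move=> a x y; rewrite scaler0 addr0.
move=> x /=; have [k1 [k2 _]] := key x; rewrite k1 k2 (lift_mul hrho hlr _ _ h).
by rewrite -mulrDl -(klD (Zlin h)) (proj2 (c2 _)) (kl0 (Zlin h)) mul0r.
Qed.
End Star.
End TdLemmas.

Section Zinj.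
Variables (K : comNzRingType) (B : algType K) (d : nat)
  (T2 : algType K) (t2 : {ffun 'I_2 -> B} -> T2)
  (Td : algType K) (td : {ffun 'I_d -> B} -> Td)
  (tp2 : is_tensor_power t2) (tpd : is_tensor_power td)
  (Z : nat -> T2 -> Td) (hZ : is_Zins t2 td Z)
  (I : Type) (bas : I -> B) (hbas : is_basis bas).

Lemma at_upd n (x : {ffun 'I_n -> B}) (p : 'I_n) z k :
  at_ (upd x p z) k = if val p == k then z else at_ x k.
Proof.
rewrite /at_; case: insubP => [j _ vj|nk]; rewrite ?ffunE.
  by subst k; rewrite (inj_eq val_inj) eq_sym.
by case: eqP => // e; move: nk; rewrite -e ltn_ord.
Qed.

Lemma at_ins (x : {ffun 'I_d -> B}) i a c : (i.+1 < d)%N ->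
  at_ (ins x i a c) i = a /\ at_ (ins x i a c) i.+1 = c.
Proof.
move=> h; have hi : (i < d)%N by exact: ltnW.
split.
  have -> : i = val (Ordinal hi) by []. by rewrite at_val ffunE eqxx.
have -> : i.+1 = val (Ordinal h) by []. by rewrite at_val ffunE /= eqxx (gtn_eqF (ltnSn i)).
Qed.

Lemma t2_pair_l a u w c : t2 (pair2 (a *: u + w) c) = a *: t2 (pair2 u c) + t2 (pair2 w c).
Proof.
have e z : pair2 z c = upd (pair2 0 c) ord0 z.
  by apply/ffunP => -[[|m] hm]; rewrite !ffunE.
by rewrite (e (a *: u + w)) (e u) (e w) (tp_ml tp2).
Qed.
Lemma t2_pair_r a u w c : t2 (pair2 c (a *: u + w)) = a *: t2 (pair2 c u) + t2 (pair2 c w).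
Proof.
have e z : pair2 c z = upd (pair2 c 0) (o1 : 'I_2) z.
  by apply/ffunP => -[[|[|m]] hm]; rewrite !ffunE.
by rewrite (e (a *: u + w)) (e u) (e w) (tp_ml tp2).
Qed.

Lemma scal_help (P a : K) (X Y : T2) : P *: (a *: X + Y) = a *: (P *: X) + P *: Y.
Proof. by rewrite scalerDr !scalerA mulrC. Qed.

Lemma Z_inj i v : (i.+1 < d)%N -> Z i v = 0 -> v = 0.
Proof.
move=> h hv.
have [phi [phi1 philin]] := exists_phi hbas.
pose C (j : 'I_d) := (val j != i) && (val j != i.+1).
pose f (x : {ffun 'I_d -> B}) : T2 :=
  (\prod_(j < d | C j) phi (x j)) *: t2 (pair2 (at_ x i) (at_ x i.+1)).
have hf : multilinear f.
  move=> x p a u w; rewrite /f !at_upd.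
  case Cp: (C p).
    have prodE z : \prod_(j < d | C j) phi (upd x p z j) =
                   phi z * \prod_(j < d | C j && (j != p)) phi (x j).
      rewrite (bigD1 p) //= ffunE eqxx; congr (_ * _); apply: eq_bigr => j /andP[_ nj].
      by rewrite ffunE (negbTE nj).
    move: Cp; rewrite /C => /andP[/negbTE -> /negbTE ->].
    by rewrite !prodE philin mulrDl scalerDl scalerA mulrA.
  have prodE z : \prod_(j < d | C j) phi (upd x p z j) = \prod_(j < d | C j) phi (x j).
    apply: eq_bigr => j Cj; rewrite ffunE; case: eqP => // e; by move: Cp; rewrite -e Cj.
  rewrite !prodE; move: Cp; rewrite /C; case: eqP => [->|_] /=.
    by rewrite (ltn_eqF (ltnSn i)) t2_pair_l scal_help.
  by move/negbFE/eqP => ->; rewrite eqxx t2_pair_r scal_help.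
have [g [lg hg]] := tp_ex tpd hf.
have gZ : forall v, g (Z i v) = v.
  apply: (tp_uniq tp2 (g2 := id)); first exact: (kl_comp (Zlin hZ h) lg).
    exact: kl_id.
  move=> x /=; rewrite (Z_t2 hZ) // hg /f.
  have [-> ->] := at_ins [ffun => 1] (x ord0) (x o1) h.
  rewrite big1 ?scale1r -?pair2_eta // => j /andP[/negbTE e1 /negbTE e2].
  by rewrite ffunE e1 e2 ffunE phi1.
by rewrite -(gZ v) hv (kl0 lg).
Qed.
End Zinj.

Section Words.
Variable d : nat.
Local Notation ok := (fun i : nat => (i.+1 < d)%N).

Lemma sref_val (a b : 'I_d) : val b = (val a).+1 -> sref d (val a) = tperm a b.
Proof. by move=> e; rewrite /sref valK -e valK. Qed.

Lemma word_cons i s : word_perm d (i :: s) = (sref d i * word_perm d s)%g.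
Proof. by rewrite /word_perm big_cons. Qed.
Lemma word_cat s1 s2 : word_perm d (s1 ++ s2) = (word_perm d s1 * word_perm d s2)%g.
Proof. by rewrite /word_perm big_cat. Qed.
Lemma word_nil : word_perm d [::] = 1%g.
Proof. by rewrite /word_perm big_nil. Qed.
Lemma word_1 i : word_perm d [:: i] = sref d i.
Proof. by rewrite /word_perm big_seq1. Qed.

Lemma tperm_word_k k (a b : 'I_d) : val b = (val a + k.+1)%N ->
  exists s, all ok s /\ word_perm d s = tperm a b.
Proof.
elim: k b => [|k IH] b e.
  exists [:: val a]; split; first by rewrite /= andbT; have := ltn_ord b; rewrite e addn1.
  by rewrite word_1 (sref_val (b := b)) // e addn1.
have h' : (val a + k.+1 < d)%N.
  apply: (@ltn_trans (val b)); last exact: ltn_ord. by rewrite e !addnS ltnSn.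
pose b' := Ordinal h'.
have [s [oks ws]] := IH b' erefl.
exists (val b' :: s ++ [:: val b']); split.
  rewrite /= all_cat oks /= andbT.
  by have hb := ltn_ord b; rewrite e addnS in hb; rewrite hb.
have eb : val b = (val b').+1 by rewrite e /= addnS.
rewrite word_cons word_cat ws word_1 (sref_val eb).
have n1 : b' != a by rewrite -(inj_eq val_inj) /=; lia.
have n2 : b != a by apply/eqP => ba; move: e; rewrite ba; lia.
by have := tpermJ a b' (tperm b' b); rewrite conjgE tpermV tpermL (tpermD n1 n2).
Qed.

Lemma tperm_word (a b : 'I_d) : exists s, all ok s /\ word_perm d s = tperm a b.
Proof.
wlog lt : a b / (val a < val b)%N.
  move=> W; case: (ltngtP (val a) (val b)) => [h|h|h]; first exact: W.
    by rewrite tpermC; apply: W.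
  by exists [::]; rewrite word_nil (val_inj h) tperm1.
move: (lt); rewrite -subn_gt0; case E: (val b - val a)%N => [|k] // _.
apply: (tperm_word_k (k := k)); lia.
Qed.

Lemma gen_words (w : 'S_d) : exists s, all ok s /\ word_perm d s = w.
Proof.
case: (prod_tpermP w) => ts -> _; elim: ts => [|t ts [s [oks ws]]].
  by exists [::]; rewrite word_nil big_nil.
have [s1 [ok1 w1]] := tperm_word t.1 t.2.
exists (s1 ++ s); rewrite all_cat ok1 oks word_cat w1 ws big_cons; by split.
Qed.

Lemma red_ex (w : 'S_d) : exists s, reduced_word w s.
Proof.
pose P m := cb (exists s, size s = m /\ all ok s /\ word_perm d s = w).
have ex : exists m, P m.
  have [s [oks ws]] := gen_words w; exists (size s); apply/cbP; by exists s.
case: (ex_minnP ex) => m /cbP [s [sz [oks ws]]] hmin.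
exists s; split => // s' oks' ws'; rewrite sz; apply: hmin; apply/cbP; by exists s'.
Qed.

Lemma red_one s : reduced_word (1%g : 'S_d) s -> s = [::].
Proof. by case=> _ _ /(_ [::] erefl word_nil); case: s. Qed.

Lemma sref_ord i (h : (i.+1 < d)%N) : sref d i = tperm (Ordinal (ltnW h)) (Ordinal h).
Proof. by rewrite -(sref_val (a := Ordinal (ltnW h))). Qed.

Lemma sref_neq1 i : (i.+1 < d)%N -> sref d i <> 1%g.
Proof.
move=> h; rewrite sref_ord => /permP /(_ (Ordinal (ltnW h))).
rewrite tpermL perm1 => /(congr1 val) /=; lia.
Qed.

Lemma red_sref i s : (i.+1 < d)%N -> reduced_word (sref d i) s -> s = [:: i].
Proof.
move=> h [oks ws hmin]; have := hmin [:: i]; rewrite /= andbT h word_1 => /(_ erefl erefl).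
clear hmin; case: s oks ws => [|i' [|]] //.
  by rewrite word_nil => _ e; exfalso; apply: (sref_neq1 h); rewrite e.
rewrite /= andbT word_1 => h' e _.
move: e; rewrite !sref_ord => /permP /(_ (Ordinal (ltnW h))); rewrite tpermL.
case: tpermP => [e|e|ne1 ne2] /(congr1 val) /= hv.
- have ev := congr1 val e; simpl in ev; congr [:: _]; lia.
- have ev := congr1 val e; simpl in ev; lia.
- lia.
Qed.
End Words.

Definition rwf d (w : 'S_d) : seq nat :=
  proj1_sig (constructive_indefinite_description _ (red_ex w)).
Lemma rwf_spec d (w : 'S_d) : reduced_word w (rwf w).
Proof. rewrite /rwf; by case: constructive_indefinite_description. Qed.

Section PBW.
Variables (K : comNzRingType) (B : algType K) (I : Type) (bas : I -> B) (hbas : is_basis bas)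
  (d : nat) (Td : algType K) (td : {ffun 'I_d -> B} -> Td) (tpd : is_tensor_power td)
  (W : algType K) (iota : Td -> W) (H : nat -> W) (liota : klinear iota)
  (hP : has_PBW bas td iota H).

Lemma pbw_key i u v : (i.+1 < d)%N -> iota u * H i + iota v = 0 -> u = 0 /\ v = 0.
Proof.
move=> h e.
pose E (jw : {ffun 'I_d -> I} * 'S_d) := iota (td [ffun k => bas (jw.1 k)]) * Hword H (rwf jw.2).
have hE : is_basis E := hP (@rwf_spec d).
have r1 : rwf (sref d i) = [:: i] := red_sref h (rwf_spec _).
have r0 : rwf (1%g : 'S_d) = [::] := red_one (rwf_spec _).
have [n1 [k1 [c1 hu]]] := tp_basis_span tpd hbas u.
have [n2 [k2 [c2 hv]]] := tp_basis_span tpd hbas v.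
pose kc := catf (fun m => (k1 m, sref d i)) (fun m => (k2 m, 1%g)).
have h0 : \sum_(m < n1 + n2) catf c1 c2 m *: E (kc m) = 0.
  rewrite sum_cat -[RHS]e hu hv (kl_sum liota) (kl_sum liota) mulr_suml; congr (_ + _); apply: eq_bigr => m _.
  - by rewrite /E /= r1 /Hword big_seq1 (klZ liota) -scalerAl.
  - by rewrite /E /= r0 /Hword big_nil mulr1 (klZ liota).
have hf := indep_fiber (proj2 hE) h0.
split.
- rewrite hu; apply: fiber_zero => m; have := hf (lshift n2 m).
  rewrite /kc catf_l fsum_cat.
  have -> : fsum (fun m => (k2 m, 1%g)) c2 (k1 m, sref d i) = 0.
    rewrite /fsum big_pred0 // => m'; apply/cbP => -[_ e1]; exact: (sref_neq1 h (esym e1)).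
  rewrite addr0 /fsum => hz; rewrite -[RHS]hz; apply: eq_bigl => m'; by apply/cbP/cbP => [-> | [->]].
- rewrite hv; apply: fiber_zero => m; have := hf (rshift n1 m).
  rewrite /kc catf_r fsum_cat.
  have -> : fsum (fun m => (k1 m, sref d i)) c1 (k2 m, 1%g) = 0.
    rewrite /fsum big_pred0 // => m'; apply/cbP => -[_ e1]; exact: (sref_neq1 h e1).
  rewrite add0r /fsum => hz; rewrite -[RHS]hz; apply: eq_bigl => m'; by apply/cbP/cbP => [-> | [->]].
Qed.
End PBW.

Section Main.
Variables (K : comNzRingType) (B : algType K) (I : Type) (bas : I -> B) (d : nat)
  (T2 : algType K) (t2 : {ffun 'I_2 -> B} -> T2)
  (Td : algType K) (td : {ffun 'I_d -> B} -> Td)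
  (S R : T2) (sigma rho : T2 -> T2)
  (Z : nat -> T2 -> Td) (sigD rhoD : nat -> Td -> Td)
  (W : algType K) (iota : Td -> W) (H : nat -> W).
Hypotheses (hd2 : (2 <= d)%N) (hbas : is_basis bas) (tp2 : is_tensor_power t2) (tpd : is_tensor_power td)
  (lsig : klinear sigma) (lrho : klinear rho) (hZ : is_Zins t2 td Z)
  (hls : is_lift t2 td Z sigma sigD) (hlr : is_lift t2 td Z rho rhoD)
  (hq : is_qwp d Z sigD rhoD S R iota H) (hP : has_PBW bas td iota H).

Lemma hiota : alg_hom iota. Proof. by case: hq. Qed.
Lemma liota : klinear iota. Proof. by case: hiota. Qed.
Lemma iotaM x y : iota (x * y) = iota x * iota y. Proof. by case: hiota. Qed.
Lemma iota1 : iota 1 = 1. Proof. by case: hiota. Qed.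
Lemma hrels : qwp_rels d Z sigD rhoD S R iota H. Proof. by case: hq. Qed.
Lemma rel_braid k : (k.+2 < d)%N -> H k * H k.+1 * H k = H k.+1 * H k * H k.+1.
Proof. by case: hrels => h _ _ _; apply: h. Qed.
Lemma rel_comm i j : (i.+1 < d)%N -> (j.+1 < d)%N -> (i.+1 < j)%N -> H i * H j = H j * H i.
Proof. by case: hrels => _ h _ _; apply: h. Qed.
Lemma rel_quad i : (i.+1 < d)%N -> H i * H i = iota (Z i S) * H i + iota (Z i R).
Proof. by case: hrels => _ _ h _; apply: h. Qed.
Lemma rel_b i b : (i.+1 < d)%N -> H i * iota b = iota (sigD i b) * H i + iota (rhoD i b).
Proof. by case: hrels => _ _ _ h; apply: h. Qed.

Lemma eq_pbw i x y x' y' : (i.+1 < d)%N ->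
  iota x * H i + iota y = iota x' * H i + iota y' -> x = x' /\ y = y'.
Proof.
move=> h e.
have : iota (x - x') * H i + iota (y - y') = 0.
  by rewrite !(klB liota) mulrBl addrACA e addrACA -mulrBl !subrr mul0r addr0.
move/(pbw_key hbas tpd liota hP h) => [/eqP e1 /eqP e2].
by split; apply/eqP; rewrite -subr_eq0.
Qed.

Section Star.
Variables (star : B -> B) (star2 : T2 -> T2) (stard : Td -> Td).
Hypotheses (hst : alg_antihom star) (h2 : tensor_ext t2 star star2) (hd : tensor_ext td star stard).

Lemma sZ i v : (i.+1 < d)%N -> sigD i (Z i v) = Z i (sigma v).
Proof. exact: (lift_Z tp2 tpd hZ lsig hls). Qed.
Lemma rZ i v : (i.+1 < d)%N -> rhoD i (Z i v) = Z i (rho v).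
Proof. exact: (lift_Z tp2 tpd hZ lrho hlr). Qed.
Lemma stZ i v : (i.+1 < d)%N -> stard (Z i v) = Z i (star2 v).
Proof. exact: (stard_Z tp2 hZ hst h2 hd). Qed.
Lemma lZ i : (i.+1 < d)%N -> klinear (Z i). Proof. exact: (Zlin hZ). Qed.

Lemma Zeq i a b : (i.+1 < d)%N -> Z i a = Z i b -> a = b.
Proof.
move=> h e; apply/eqP; rewrite -subr_eq0; apply/eqP; apply: (Z_inj tp2 tpd hZ hbas h).
by rewrite (klB (lZ h)) e subrr.
Qed.

Definition conds :=
  (sigma (star2 S) = S /\ rho (star2 S) + star2 R = R) /\
  (forall b : T2, sigma (star2 (sigma b)) = star2 b /\
                  rho (star2 (sigma b)) + star2 (rho b) = 0).

Lemma necessity psi : induced_star d iota H stard psi -> conds.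
Proof.
case=> [[lpsi mpsi psi1] hpi hpH].
have h0 : (0.+1 < d)%N by [].
split.
  have e := congr1 psi (rel_quad h0).
  rewrite mpsi hpH // (klD lpsi) mpsi !hpi hpH // rel_b // !stZ // sZ // rZ // -addrA -(klD liota) in e.
  rewrite rel_quad // in e.
  have [e1 e2] := eq_pbw h0 e.
  split; first by apply: (Zeq h0).
  by apply: (Zeq h0); rewrite (klD (lZ h0)).
move=> b.
have e := congr1 psi (rel_b (Z 0 b) h0).
rewrite mpsi hpH // hpi (klD lpsi) mpsi hpH // !hpi sZ // rZ // !stZ // rel_b // sZ // rZ // in e.
rewrite -addrA -(klD liota) in e.
have e' : iota (Z 0 (star2 b)) * H 0 + iota 0 =
  iota (Z 0 (sigma (star2 (sigma b)))) * H 0 +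
  iota (Z 0 (rho (star2 (sigma b))) + Z 0 (star2 (rho b))) by rewrite (kl0 liota) addr0.
have [e1 e2] := eq_pbw h0 e'.
split; first by apply: (Zeq h0).
apply: (Zeq h0); by rewrite (klD (lZ h0)) (kl0 (lZ h0)).
Qed.


Lemma sufficiency : conds -> exists psi, induced_star d iota H stard psi.
Proof.
case=> [[c11 c12] c2].
pose f (x : Td) : opA W := iota (stard x).
have hf : alg_hom f.
  split.
  - move=> a x y; rewrite /f (proj1 hd) liota; reflexivity.
  - move=> x y; rewrite /f (stard_mul tpd hst hd) iotaM; reflexivity.
  - rewrite /f (stard1 tpd hst hd) iota1; reflexivity.
have hr : qwp_rels d Z sigD rhoD S R f (fun i => H i : opA W).
  split.
  - move=> k hk; change (H k * (H k.+1 * H k) = H k.+1 * (H k * H k.+1)).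
    by rewrite !mulrA rel_braid.
  - move=> i j hi hj hij; change (H j * H i = H i * H j); by rewrite (rel_comm hi hj hij).
  - move=> i hi; change (H i * H i = H i * iota (stard (Z i S)) + iota (stard (Z i R))).
    rewrite rel_b // !stZ // sZ // rZ // c11 -addrA -(klD liota) -(klD (lZ hi)) c12.
    exact: rel_quad.
  - move=> i b hi.
    change (iota (stard b) * H i = H i * iota (stard (sigD i b)) + iota (stard (rhoD i b))).
    have [l1 l2] := lift_cond tp2 tpd hZ hst h2 hd lsig lrho hls hlr c2 hi b.
    by rewrite rel_b // l1 -addrA -(klD liota) l2 (kl0 liota) addr0.
have [[g [hg gi gH]] _] := (let: And3 _ _ hu := hq in hu) _ _ _ hf hr.
by exists (g : W -> W); split.
Qed.
End Star.

Lemma comp_id psi1 psi2 (sd1 sd2 : Td -> Td) :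
  induced_star d iota H sd1 psi1 -> induced_star d iota H sd2 psi2 ->
  (forall x, sd1 (sd2 x) = x) -> forall y, psi1 (psi2 y) = y.
Proof.
case=> [[l1 m1 o1] i1 h1] [[l2 m2 o2] i2 h2] e.
apply: (proj2 ((let: And3 _ _ hu := hq in hu) _ _ _ hiota hrels) _ id).
- split; first exact: kl_comp l2 l1.
  + by move=> x y /=; rewrite m2 m1.
  + by rewrite /= o2 o1.
- by split.
- by move=> x /=; rewrite i2 i1 e.
- by move=> i hi /=; rewrite h2 // h1.
Qed.

Lemma fmap_upd (f : B -> B) n (x : {ffun 'I_n -> B}) i u :
  fmap f (upd x i u) = upd (fmap f x) i (f u).
Proof. by apply/ffunP => j; rewrite !ffunE; case: eqP. Qed.

Lemma ext_ex n (T : algType K) (t : {ffun 'I_n -> B} -> T) (tp : is_tensor_power t)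
  (f : B -> B) (lf : klinear f) : exists F, tensor_ext t f F.
Proof.
have hm : multilinear (fun x => t (fmap f x)).
  by move=> x i a u v; rewrite !fmap_upd lf (tp_ml tp).
have [F [lF hF]] := tp_ex tp hm; by exists F; split.
Qed.

Lemma ext_inv n (T : algType K) (t : {ffun 'I_n -> B} -> T) (tp : is_tensor_power t)
  (f g : B -> B) (F G : T -> T) : tensor_ext t f F -> tensor_ext t g G -> cancel g f ->
  forall z, F (G z) = z.
Proof.
move=> [lF hF] [lG hG] c; apply: (tp_uniq tp (g2 := id)).
- exact: kl_comp lG lF.
- exact: kl_id.
move=> x /=; rewrite hG hF; congr t; apply/ffunP => j; by rewrite !ffunE c.
Qed.

Lemma bij_part (star : B -> B) (star2 : T2 -> T2) (stard : Td -> Td)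
  (hstar : alg_antiaut star) (h2 : tensor_ext t2 star star2) (hd : tensor_ext td star stard)
  psi : induced_star d iota H stard psi -> alg_antiaut psi.
Proof.
move=> hpsi.
case: hstar => hst [sinv sK Ks].
have [[c11 c12] c2] := necessity hst h2 hd hpsi.
have [lst mst st1] := hst.
have lsi : klinear sinv.
  move=> a x y; apply: (can_inj sK); by rewrite Ks lst !Ks.
have hsti : alg_antihom sinv.
  split => //.
  - move=> x y; apply: (can_inj sK); by rewrite Ks mst !Ks.
  - by apply: (can_inj sK); rewrite Ks st1.
have [T' hT'] := ext_ex tp2 lsi.
have [D' hD'] := ext_ex tpd lsi.
have TT' := ext_inv tp2 h2 hT' Ks.
have T'T := ext_inv tp2 hT' h2 sK.
have DD' := ext_inv tpd hd hD' Ks.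
have D'D := ext_inv tpd hD' hd sK.
have lT := proj1 h2.
have Tinj : forall x y, star2 x = star2 y -> x = y.
  by move=> x y e; rewrite -(T'T x) -(T'T y) e.
have sinj : forall x y, sigma x = sigma y -> x = y.
  by move=> x y e; apply: Tinj; rewrite -(proj1 (c2 x)) -(proj1 (c2 y)) e.
have c11' : sigma (T' S) = S.
  apply: Tinj; apply: sinj; rewrite (proj1 (c2 _)) TT'; exact: esym.
have c12' : rho (T' S) + T' R = R.
  apply: Tinj; rewrite (klD lT) TT'.
  have e0 := proj2 (c2 (T' S)); rewrite c11' in e0.
  have e3 : star2 (rho (T' S)) = - rho (star2 S).
    by apply/eqP; rewrite -addr_eq0 addrC e0.
  by rewrite e3 -[in LHS]c12 addrA addNr add0r.
have c2' : forall b, sigma (T' (sigma b)) = T' b /\ rho (T' (sigma b)) + T' (rho b) = 0.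
  move=> b.
  have e1 : star2 (sigma (T' (sigma b))) = b.
    apply: sinj; by rewrite (proj1 (c2 _)) TT'.
  split; first by rewrite -[in RHS]e1 T'T.
  apply: Tinj; rewrite (klD lT) TT' (kl0 lT).
  have e0 := proj2 (c2 (T' (sigma b))); rewrite e1 in e0.
  by rewrite addrC.
have [psi' hpsi'] := sufficiency hsti hT' hD' (conj (conj c11' c12') c2').
split; first by case: hpsi.
exists psi'.
- exact: (comp_id hpsi' hpsi D'D).
- exact: (comp_id hpsi hpsi' DD').
Qed.
End Main.

Theorem theorem7p4 (K : comNzRingType) (B : algType K) (I : Type) (bas : I -> B)
  (d : nat)
  (T2 : algType K) (t2 : {ffun 'I_2 -> B} -> T2)
  (Td : algType K) (td : {ffun 'I_d -> B} -> Td)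
  (S R : T2) (sigma rho : T2 -> T2)
  (Z : nat -> T2 -> Td) (sigD rhoD : nat -> Td -> Td)
  (W : algType K) (iota : Td -> W) (H : nat -> W)
  (star : B -> B) (star2 : T2 -> T2) (stard : Td -> Td) :
  (2 <= d)%N ->
  is_basis bas ->
  is_tensor_power t2 -> is_tensor_power td ->
  klinear sigma -> klinear rho ->
  is_Zins t2 td Z ->
  is_lift t2 td Z sigma sigD -> is_lift t2 td Z rho rhoD ->
  is_qwp d Z sigD rhoD S R iota H ->
  has_PBW bas td iota H ->
  alg_antiaut star ->
  tensor_ext t2 star star2 -> tensor_ext td star stard ->
  ((exists psi : W -> W, induced_star d iota H stard psi) <->
     ((sigma (star2 S) = S /\ rho (star2 S) + star2 R = R) /\
      (forall b : T2, sigma (star2 (sigma b)) = star2 b /\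
                      rho (star2 (sigma b)) + star2 (rho b) = 0)))
  /\ (forall psi : W -> W, induced_star d iota H stard psi -> alg_antiaut psi).
Proof.
move=> hd2 hbas tp2 tpd lsig lrho hZ hls hlr hq hP hstar h2 hd.
have hst : alg_antihom star by case: hstar.
split; [split|].
- by move=> [psi hpsi]; exact: (necessity hd2 hbas tp2 tpd lsig lrho hZ hls hlr hq hP hst h2 hd hpsi).
- by move=> hc; exact: (sufficiency tp2 tpd lsig lrho hZ hls hlr hq hst h2 hd hc).
- by move=> psi hpsi; exact: (bij_part hd2 hbas tp2 tpd lsig lrho hZ hls hlr hq hP hstar h2 hd hpsi).
Qed.
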